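(* The flat braid group $\mathrm{FB}_7$ is (abstractly) commensurable to the right-angled Artin group $A(P_4)$, i.e.\ they contain isomorphic finite-index subgroups.
   Context: $\mathrm{FB}_7=\langle \sigma_1,\ldots,\sigma_6\mid \sigma_i^2=1,\ [\sigma_i,\sigma_j]=1 \text{ whenever } |i-j|\ge 2\rangle$. $P_4$ denotes the path of length $4$ (five vertices $v_0,\dots,v_4$, with $v_i$ adjacent to $v_{i+1}$), and $A(P_4)=\langle v_0,\ldots,v_4\mid [v_i,v_{i+1}]=1,\ 0\le i\le 3\rangle$ is the corresponding right-angled Artin group. *)

(* Defs.v *)
(* Finitely presented groups are modelled concretely:
   elements are words in the generators and their inverses, and equality in the
   group is the congruence generated by free cancellation and the relators.   *)
From Stdlib Require Import List.
From mathcomp Require Import all_boot.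
Set Implicit Arguments. Unset Strict Implicit. Unset Printing Implicit Defensive.

(* A letter: (generator, inv) ; inv = true means the inverse of the generator. *)
Definition word (X : Type) := seq (X * bool).

Definition letter_inv (X : Type) (a : X * bool) : X * bool := (a.1, ~~ a.2).
Definition word_inv (X : Type) (w : word X) : word X := rev (map (@letter_inv X) w).

Inductive peq (X : Type) (R : word X -> Prop) : word X -> word X -> Prop :=
| peq_refl u : peq R u u
| peq_sym u v : peq R u v -> peq R v u
| peq_trans u v w : peq R u v -> peq R v w -> peq R u w
| peq_free (a b : word X) (x : X * bool) :
    peq R (a ++ x :: letter_inv x :: b) (a ++ b)
| peq_rel (a b r : word X) : R r -> peq R (a ++ r ++ b) (a ++ b).

Definition is_subgroup (X : Type) (R : word X -> Prop) (H : word X -> Prop) : Prop :=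
  [/\ (forall u v, peq R u v -> H u -> H v),
      H [::],
      (forall u v, H u -> H v -> H (u ++ v)) &
      (forall u, H u -> H (word_inv u))].

Definition finite_index (X : Type) (R : word X -> Prop) (H : word X -> Prop) : Prop :=
  exists T : seq (word X), forall g : word X,
    exists2 t, In t T & exists h, H h /\ peq R g (h ++ t).

Definition subgroup_iso (X1 X2 : Type) (R1 : word X1 -> Prop) (R2 : word X2 -> Prop)
    (H1 : word X1 -> Prop) (H2 : word X2 -> Prop) (f : word X1 -> word X2) : Prop :=
  [/\ (forall u, H1 u -> H2 (f u)),
      (forall u v, H1 u -> H1 v -> peq R1 u v -> peq R2 (f u) (f v)),
      (forall u v, H1 u -> H1 v -> peq R2 (f (u ++ v)) (f u ++ f v)),
      (forall u v, H1 u -> H1 v -> peq R2 (f u) (f v) -> peq R1 u v) &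
      (forall w, H2 w -> exists u, H1 u /\ peq R2 (f u) w)].

Definition commensurable (X1 X2 : Type) (R1 : word X1 -> Prop) (R2 : word X2 -> Prop)
  : Prop :=
  exists (H1 : word X1 -> Prop) (H2 : word X2 -> Prop) (f : word X1 -> word X2),
    [/\ is_subgroup R1 H1, finite_index R1 H1, is_subgroup R2 H2,
        finite_index R2 H2 & subgroup_iso R1 R2 H1 H2 f].

Definition gen (X : Type) (x : X) : X * bool := (x, false).
Definition ginv (X : Type) (x : X) : X * bool := (x, true).
Definition commutator_word (X : Type) (x y : X) : word X :=
  [:: gen x; gen y; ginv x; ginv y].

(* FB_7: generators sigma_1..sigma_6, encoded as i : 'I_6 (sigma_{i+1}). *)
Definition FB7_rel (w : word 'I_6) : Prop :=
  (exists i : 'I_6, w = [:: gen i; gen i]) \/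
  (exists i j : 'I_6, (i.+2 <= j \/ j.+2 <= i) /\ w = commutator_word i j).

Definition AP4_rel (w : word 'I_5) : Prop :=
  exists i j : 'I_5, val j = (val i).+1 /\ w = commutator_word i j.

(* Main.v *)
Require Import Defs.
From mathcomp Require Import all_boot.
Set Implicit Arguments. Unset Strict Implicit. Unset Printing Implicit Defensive.

Section Gen.
Variable X : eqType.
Variable R : word X -> Prop.

Lemma letter_invK : involutive (@letter_inv X).
Proof. by case=> x b; rewrite /letter_inv /= negbK. Qed.

Lemma word_inv_cat (u v : word X) : word_inv (u ++ v) = word_inv v ++ word_inv u.
Proof. by rewrite /word_inv map_cat rev_cat. Qed.

Lemma word_inv_cons (x : X * bool) (w : word X) :
  word_inv (x :: w) = word_inv w ++ [:: letter_inv x].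
Proof. by rewrite /word_inv /= rev_cons cats1. Qed.

Lemma word_inv_nil : word_inv ([::] : word X) = [::].
Proof. by []. Qed.

Lemma word_invK : involutive (@word_inv X).
Proof.
elim=> [|x w IH] //; rewrite word_inv_cons word_inv_cat IH.
by rewrite /word_inv /= letter_invK.
Qed.

Lemma peq_ctx (a b u v : word X) : peq R u v -> peq R (a ++ u ++ b) (a ++ v ++ b).
Proof.
elim=> {u v}.
- by move=> u; apply: peq_refl.
- by move=> u v _ H; apply: peq_sym.
- by move=> u v w _ H1 _ H2; apply: peq_trans H2.
- move=> a' b' x.
  have -> : a ++ (a' ++ x :: letter_inv x :: b') ++ b
           = (a ++ a') ++ x :: letter_inv x :: (b' ++ b) by rewrite -!catA.
  have -> : a ++ (a' ++ b') ++ b = (a ++ a') ++ (b' ++ b) by rewrite -!catA.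
  exact: peq_free.
- move=> a' b' r Hr.
  have -> : a ++ (a' ++ r ++ b') ++ b = (a ++ a') ++ r ++ (b' ++ b) by rewrite -!catA.
  have -> : a ++ (a' ++ b') ++ b = (a ++ a') ++ (b' ++ b) by rewrite -!catA.
  exact: peq_rel.
Qed.

Lemma peq_cancel (w a b : word X) : peq R (a ++ w ++ word_inv w ++ b) (a ++ b).
Proof.
elim: w a b => [|x w IH] a b; first by apply: peq_refl.
rewrite word_inv_cons.
apply: (@peq_trans _ _ _ (a ++ x :: letter_inv x :: b)); last exact: peq_free.
have -> : a ++ (x :: w) ++ (word_inv w ++ [:: letter_inv x]) ++ b
   = rcons a x ++ w ++ word_inv w ++ (letter_inv x :: b) by rewrite -cats1 -!catA.
have -> : a ++ x :: letter_inv x :: b = rcons a x ++ (letter_inv x :: b)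
  by rewrite -cats1 -catA.
exact: IH.
Qed.

Definition trivial (t : word X) := forall a b, peq R (a ++ t ++ b) (a ++ b).

Lemma triv_rot (r1 r2 : word X) : trivial (r1 ++ r2) -> trivial (r2 ++ r1).
Proof.
move=> H a b.
apply: (@peq_trans _ _ _ ((a ++ r2 ++ r1) ++ r2 ++ word_inv r2 ++ b)).
  by rewrite -!catA; apply: peq_sym; have := peq_cancel r2 (a ++ r2 ++ r1) b; rewrite -!catA.
apply: (@peq_trans _ _ _ ((a ++ r2) ++ word_inv r2 ++ b)); last first.
  by rewrite -catA; apply: peq_cancel.
have := H (a ++ r2) (word_inv r2 ++ b); by rewrite -!catA.
Qed.

Lemma triv_inv (t : word X) : trivial t -> trivial (word_inv t).
Proof.
move=> H a b.
apply: (@peq_trans _ _ _ ((a ++ word_inv t) ++ t ++ b)).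
  by rewrite -catA; apply: peq_sym; have := H (a ++ word_inv t) b; rewrite -!catA.
have := peq_cancel (word_inv t) a b; by rewrite word_invK -!catA.
Qed.

Lemma triv_rotk k (t : word X) : trivial t -> trivial (rot k t).
Proof. by move=> H; rewrite /rot; apply: triv_rot; rewrite cat_take_drop. Qed.

Lemma peq_inv (u v : word X) : peq R u v -> peq R (word_inv u) (word_inv v).
Proof.
elim=> {u v}.
- by move=> u; apply: peq_refl.
- by move=> u v _ H; apply: peq_sym.
- by move=> u v w _ H1 _ H2; apply: peq_trans H2.
- move=> a b x; rewrite !word_inv_cat !word_inv_cons.
  have -> : (word_inv b ++ [:: letter_inv (letter_inv x)]) ++ [:: letter_inv x]
     = word_inv b ++ [:: x; letter_inv x] by rewrite letter_invK -catA.
  rewrite -catA /=; have := peq_free R (word_inv b) (word_inv a) x.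
  by [].
- move=> a b r Hr; rewrite !word_inv_cat.
  have T : trivial r by move=> a' b'; apply: peq_rel.
  by rewrite -catA; apply: triv_inv.
Qed.

Lemma peq_cat (u v u' v' : word X) : peq R u u' -> peq R v v' -> peq R (u ++ v) (u' ++ v').
Proof.
move=> H1 H2; apply: (@peq_trans _ _ _ (u' ++ v)).
  by have := peq_ctx [::] v H1; rewrite /=.
by have := peq_ctx u' [::] H2; rewrite !cats0.
Qed.

Lemma peq_from_inv (u v : word X) : peq R (u ++ word_inv v) [::] -> peq R u v.
Proof.
move=> H.
apply: (@peq_trans _ _ _ (u ++ word_inv v ++ word_inv (word_inv v) ++ [::])).
  by apply: peq_sym; have := peq_cancel (word_inv v) u [::]; rewrite !cats0.
rewrite word_invK cats0 catA.
by have := peq_ctx [::] v H.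
Qed.

Variable rs : seq (word X).
Hypothesis rsR : forall r, r \in rs -> R r.

Definition is_free (c : word X) :=
  if c is [:: x; y] then y == letter_inv x else false.

Definition valid (c : word X) :=
  is_free c || has (fun r => has (fun k => (c == rot k r) || (c == rot k (word_inv r)))
                                  (iota 0 (size r))) rs.

Lemma valid_triv c : valid c -> trivial c.
Proof.
case/orP.
  case: c => [|x [|y [|? ?]]] //= /eqP -> a b; exact: peq_free.
case/hasP=> r /rsR Hr /hasP [k _] /orP [] /eqP ->; apply: triv_rotk.
  by move=> a b; apply: peq_rel.
by apply: triv_inv => a b; apply: peq_rel.
Qed.

Inductive mv := Ins of nat & word X | Del of nat & word X.

Definition app1 (m : mv) (w : word X) : option (word X) :=
  match m with
  | Ins p c => if valid c then Some (take p w ++ c ++ drop p w) else None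
  | Del p c => if valid c && (take (size c) (drop p w) == c)
               then Some (take p w ++ drop (p + size c) w) else None
  end.

Fixpoint run (ms : seq mv) (w : word X) : option (word X) :=
  match ms with
  | [::] => Some w
  | m :: ms' => if app1 m w is Some w' then run ms' w' else None
  end.

Lemma app1_sound m w w' : app1 m w = Some w' -> peq R w w'.
Proof.
case: m => p c /=.
  case V: (valid c) => //; case=> <-.
  apply: peq_sym; have := valid_triv V (take p w) (drop p w).
  by rewrite cat_take_drop.
case V: (valid c) => //=; case: eqP => // E [<-].
have {1}-> : w = take p w ++ c ++ drop (p + size c) w.
  by rewrite addnC -drop_drop -{1}E !cat_take_drop.
exact: valid_triv.
Qed.

Lemma run_sound ms w v : run ms w = Some v -> peq R w v.
Proof.
elim: ms w => [|m ms IH] w /=; first by case=> ->; apply: peq_refl.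
case E: (app1 m w) => [w'|] // H.
exact: peq_trans (app1_sound E) (IH _ H).
Qed.

(* solver: no proof needed *)
Variable cm : X -> X -> bool.
Variable racg : bool.
Variable x0 : X * bool.
Definition partner (x : X * bool) := if racg then x else letter_inv x.
Fixpoint scan (x : X * bool) (s : word X) (k : nat) : option nat :=
  match s with
  | [::] => None
  | y :: s' => if y == partner x then Some k
               else if cm x.1 y.1 then scan x s' k.+1 else None
  end.
Fixpoint find (s : word X) (p : nat) : option (nat * nat) :=
  match s with
  | [::] => None
  | x :: s' => if scan x s' 0 is Some k then Some (p, k) else find s' p.+1
  end.
Definition app1u (m : mv) (w : word X) :=
  match m with
  | Ins p c => take p w ++ c ++ drop p w
  | Del p c => take p w ++ drop (p + size c) w
  end.
Definition runu (ms : seq mv) (w : word X) := foldl (fun w m => app1u m w) w ms.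
Definition swapms (x y : X * bool) q :=
  [:: Ins q.+2 [:: letter_inv y; letter_inv x; y; x];
      Del q.+1 [:: y; letter_inv y]; Del q [:: x; letter_inv x]].
Definition redstep (w : word X) p k : seq mv :=
  let x := nth x0 w p in
  flatten [seq swapms x (nth x0 w (p + 1 + t)) (p + t) | t <- iota 0 k]
  ++ [:: Del (p + k) [:: x; partner x]].
Fixpoint reduce (fuel : nat) (w : word X) : seq mv :=
  match fuel with
  | 0 => [::]
  | f.+1 => if find w 0 is Some (p, k) then
              let ms := redstep w p k in ms ++ reduce f (runu ms w)
            else [::]
  end.
Definition normms (w : word X) : seq mv :=
  if racg then
    flatten [seq (let y := nth x0 w p in
                  if y.2 then [:: Ins p [:: (y.1, false); (y.1, false)];
                                  Del p.+1 [:: (y.1, false); (y.1, true)]]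
                  else [::]) | p <- iota 0 (size w)]
  else [::].
Definition solve (w : word X) :=
  let ms := normms w in ms ++ reduce (size w) (runu ms w).
Definition eqcheck (u v : word X) :=
  run (solve (u ++ word_inv v)) (u ++ word_inv v) == Some [::].

Lemma eqcheck_sound u v : eqcheck u v -> peq R u v.
Proof. by move=> /eqP /run_sound; apply: peq_from_inv. Qed.

End Gen.
Definition actT : seq (seq nat) := [::[::1;1;2;4;4;8];[::0;0;3;5;5;9];[::3;3;0;6;6;10];[::2;2;1;7;7;11];[::5;5;6;0;0;12];[::4;4;7;1;1;13];[::7;7;4;2;2;14];[::6;6;5;3;3;15];[::9;9;10;12;12;0];[::8;8;11;13;13;1];[::11;11;8;14;14;2];[::10;10;9;15;15;3];[::13;13;14;8;8;4];[::12;12;15;9;9;5];[::15;15;12;10;10;6];[::14;14;13;11;11;7]].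
Definition labT : seq (seq (seq (nat*bool))) := [::[::[::];[::(1,true)];[::];[::];[::(0,true)];[::]];
 [::[::];[::(1,false)];[::];[::];[::(0,true)];[::]];
 [::[::];[::(3,true)];[::];[::];[::(0,true);(0,false);(4,true)];[::]];
 [::[::];[::(3,false)];[::];[::];[::(0,true);(0,false);(4,true)];[::]];
 [::[::];[::(1,true)];[::(0,false);(4,true)];[::];[::(0,false)];[::]];
 [::[::];[::(1,false)];[::(0,false);(4,true)];[::];[::(0,false)];[::]];
 [::[::];[::(3,true)];[::(4,false);(0,true)];[::];[::(4,false);(0,true);(0,false)];[::]];
 [::[::];[::(3,false)];[::(4,false);(0,true)];[::];[::(4,false);(0,true);(0,false)];[::]];
 [::[::];[::(1,true)];[::];[::];[::(2,true);(0,true)];[::]];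
 [::[::];[::(1,false)];[::];[::];[::(2,true);(0,true)];[::]];
 [::[::];[::(3,true)];[::];[::];[::(2,true);(0,true);(0,false);(4,true)];[::]];
 [::[::];[::(3,false)];[::];[::];[::(2,true);(0,true);(0,false);(4,true)];[::]];
 [::[::];[::(1,true)];[::(0,false);(4,true)];[::];[::(0,false);(2,false)];[::]];
 [::[::];[::(1,false)];[::(0,false);(4,true)];[::];[::(0,false);(2,false)];[::]];
 [::[::];[::(3,true)];[::(4,false);(0,true)];[::];[::(4,false);(0,true);(0,false);(2,false)];[::]];
 [::[::];[::(3,false)];[::(4,false);(0,true)];[::];[::(4,false);(0,true);(0,false);(2,false)];[::]]].
Definition tT : seq (seq (nat*bool)) := [::[::];[::(0,false)];[::(2,false)];[::(0,false);(2,false)];[::(3,false)];[::(0,false);(3,false)];[::(2,false);(3,false)];[::(0,false);(2,false);(3,false)];[::(5,false)];[::(0,false);(5,false)];[::(2,false);(5,false)];[::(0,false);(2,false);(5,false)];[::(3,false);(5,false)];[::(0,false);(3,false);(5,false)];[::(2,false);(3,false);(5,false)];[::(0,false);(2,false);(3,false);(5,false)]].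
Definition PT : seq (seq (nat*bool)) := [::[::(3,false);(4,false)];[::(0,false);(3,false);(5,false);(1,false);(5,true);(3,true)];[::(4,true);(3,true);(3,false);(5,false);(4,false);(5,true)];[::(0,false);(2,false);(3,false);(5,false);(1,false);(5,true);(3,true);(2,true)];[::(2,false);(3,false);(5,false);(2,false);(5,true);(3,true);(3,false);(4,false)]].

Definition ordn (n k : nat) : 'I_n.+1 := Ordinal (ltn_pmod k (ltn0Sn n)).
Lemma ordnK n (i : 'I_n.+1) : ordn n i = i.
Proof. by apply: val_inj; rewrite /= modn_small. Qed.

Definition toW (n : nat) (w : seq (nat * bool)) : word 'I_n.+1 :=
  map (fun p => (ordn n p.1, p.2)) w.

Definition rsFB : seq (word 'I_6) :=
  [seq [:: gen (ordn 5 i); gen (ordn 5 i)] | i <- iota 0 6] ++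
  [seq commutator_word (ordn 5 p.1) (ordn 5 p.2) |
     p <- [seq (i, j) | i <- iota 0 6, j <- iota 0 6] & (p.1.+2 <= p.2) || (p.2.+2 <= p.1)].
Definition rsAP : seq (word 'I_5) :=
  [seq commutator_word (ordn 4 p.1) (ordn 4 p.2) |
     p <- [seq (i, j) | i <- iota 0 5, j <- iota 0 5] & p.2 == p.1.+1].

Definition cmFB (i j : 'I_6) := (i.+2 <= j) || (j.+2 <= i).
Definition cmAP (i j : 'I_5) := (val j == (val i).+1) || (val i == (val j).+1).

Definition eqFB (u v : word 'I_6) := eqcheck rsFB cmFB true (ord0, false) u v.
Definition eqAP (u v : word 'I_5) := eqcheck rsAP cmAP false (ord0, false) u v.

Definition actI (c : 'I_16) (i : 'I_6) : 'I_16 := ordn 15 (nth 0 (nth [::] actT c) i).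
Definition act (c : 'I_16) (x : 'I_6 * bool) := actI c x.1.
Definition endp c (w : word 'I_6) := foldl act c w.
Definition labP (c : 'I_16) (i : 'I_6) : word 'I_5 := toW 4 (nth [::] (nth [::] labT c) i).
Definition lab c (x : 'I_6 * bool) :=
  if x.2 then word_inv (labP (actI c x.1) x.1) else labP c x.1.
Fixpoint rho c (w : word 'I_6) : word 'I_5 :=
  match w with [::] => [::] | x :: w' => lab c x ++ rho (act c x) w' end.
Definition tr (c : 'I_16) : word 'I_6 := toW 5 (nth [::] tT c).
Definition P (k : 'I_5) : word 'I_6 := toW 5 (nth [::] PT k).
Definition psiL (x : 'I_5 * bool) := if x.2 then word_inv (P x.1) else P x.1.
Definition psi (w : word 'I_5) : word 'I_6 := flatten (map psiL w).

Definition allI n (p : 'I_n.+1 -> bool) := all (fun k => p (ordn n k)) (iota 0 n.+1).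
Lemma allIP n (p : 'I_n.+1 -> bool) : allI p -> forall i, p i.
Proof.
move=> /allP H i; have := H (val i); rewrite ordnK; apply.
by rewrite mem_iota add0n ltn_ord.
Qed.

Definition chk_inv := allI (fun c : 'I_16 => allI (fun i : 'I_6 => actI (actI c i) i == c)).
Lemma chk_inv_ok : chk_inv. Proof. vm_compute. reflexivity. Qed.

Definition chk_rel := allI (fun c : 'I_16 => allI (fun i : 'I_6 => allI (fun j : 'I_6 =>
   [&& endp c [:: gen i; gen i] == c, eqAP (rho c [:: gen i; gen i]) [::] &
       cmFB i j ==> (endp c (commutator_word i j) == c) && eqAP (rho c (commutator_word i j)) [::]]))).
Lemma chk_rel_ok : chk_rel. Proof. vm_compute. reflexivity. Qed.

Definition chk_psi := allI (fun i : 'I_5 => allI (fun j : 'I_5 =>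
   [&& endp ord0 (P i) == ord0, eqAP (rho ord0 (P i)) [:: gen i] &
     (val j == (val i).+1) ==> eqFB (psi (commutator_word i j)) [::]])).
Lemma chk_psi_ok : chk_psi. Proof. vm_compute. reflexivity. Qed.

Definition chk_tel := allI (fun c : 'I_16 => allI (fun i : 'I_6 =>
   eqFB (psi (lab c (i, false))) (tr c ++ (i, false) :: word_inv (tr (actI c i))) &&
   eqFB (psi (lab c (i, true))) (tr c ++ (i, true) :: word_inv (tr (actI c i))))).
Lemma chk_tel_ok : chk_tel. Proof. vm_compute. reflexivity. Qed.

Lemma tr0 : tr ord0 = [::]. Proof. by vm_compute. Qed.

Lemma rsFB_ok r : r \in rsFB -> FB7_rel r.
Proof.
rewrite mem_cat => /orP [] /mapP.
  by move=> [i _ ->]; left; exists (ordn 5 i).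
move=> [p]; rewrite mem_filter => /andP [Hc Hp] ->; right.
case/allpairsP: Hp => [[i j] [Hi Hj Ep]]; subst p.
rewrite !mem_iota /= in Hi Hj.
exists (ordn 5 i), (ordn 5 j); split=> //=.
rewrite !modn_small //; by case/orP: Hc; [left|right].
Qed.

Lemma rsAP_ok r : r \in rsAP -> AP4_rel r.
Proof.
move/mapP=> [p]; rewrite mem_filter => /andP [Hc Hp] ->.
case/allpairsP: Hp => [[i j] [Hi Hj Ep]]; subst p.
rewrite !mem_iota /= in Hi Hj.
exists (ordn 4 i), (ordn 4 j); split=> //=.
by rewrite !modn_small //; apply/eqP.
Qed.

Lemma chk_inv' c i : actI (actI c i) i == c.
Proof. have H := chk_inv_ok; rewrite /chk_inv in H. exact: (allIP (allIP H c) i). Qed.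
Lemma chk_rel' c i j : [&& endp c [:: gen i; gen i] == c, eqAP (rho c [:: gen i; gen i]) [::] &
       cmFB i j ==> (endp c (commutator_word i j) == c) && eqAP (rho c (commutator_word i j)) [::]].
Proof. have H := chk_rel_ok; rewrite /chk_rel in H. exact: (allIP (allIP (allIP H c) i) j). Qed.
Lemma chk_psi' i j : [&& endp ord0 (P i) == ord0, eqAP (rho ord0 (P i)) [:: gen i] &
     (val j == (val i).+1) ==> eqFB (psi (commutator_word i j)) [::]].
Proof. have H := chk_psi_ok; rewrite /chk_psi in H. exact: (allIP (allIP H i) j). Qed.
Lemma chk_tel' c i :
   eqFB (psi (lab c (i, false))) (tr c ++ (i, false) :: word_inv (tr (actI c i))) &&
   eqFB (psi (lab c (i, true))) (tr c ++ (i, true) :: word_inv (tr (actI c i))).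
Proof. have H := chk_tel_ok; rewrite /chk_tel in H. exact: (allIP (allIP H c) i). Qed.

Lemma eqFB_sound u v : eqFB u v -> peq FB7_rel u v.
Proof. exact: (eqcheck_sound rsFB_ok). Qed.
Lemma eqAP_sound u v : eqAP u v -> peq AP4_rel u v.
Proof. exact: (eqcheck_sound rsAP_ok). Qed.

Lemma endp_cat c u v : endp c (u ++ v) = endp (endp c u) v.
Proof. exact: foldl_cat. Qed.

Lemma rho_cat c u v : rho c (u ++ v) = rho c u ++ rho (endp c u) v.
Proof. by elim: u c => //= x u IH c; rewrite IH catA. Qed.

Lemma actI_inv c i : actI (actI c i) i = c.
Proof. exact: (eqP (chk_inv' c i)). Qed.

Lemma act_inv c x : act (act c x) (letter_inv x) = c.
Proof. exact: actI_inv. Qed.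

Lemma endp_inv c w : endp (endp c w) (word_inv w) = c.
Proof.
elim: w c => // x w IH c.
by rewrite word_inv_cons endp_cat /= IH act_inv.
Qed.

Lemma lab_inv c x : lab (act c x) (letter_inv x) = word_inv (lab c x).
Proof.
case: x => i [] /=; rewrite /lab /act /=; first by rewrite word_invK.
by rewrite actI_inv.
Qed.

Lemma rho_inv c w : rho (endp c w) (word_inv w) = word_inv (rho c w).
Proof.
elim: w c => [|x w IH] c; first by [].
rewrite word_inv_cons rho_cat /= IH endp_inv word_inv_cat /= cats0.
by rewrite lab_inv.
Qed.

Lemma rel_loop r c : FB7_rel r -> endp c r = c /\ peq AP4_rel (rho c r) [::].
Proof.
case=> [[i ->]|[i [j [Hij ->]]]].
  have /and3P [E1 E2 _] := chk_rel' c i i.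
  by split; [exact: eqP | exact: eqAP_sound].
have /and3P [_ _ E3] := chk_rel' c i j.
have Hc : cmFB i j by apply/orP; case: Hij; [left|right].
move/implyP/(_ Hc)/andP: E3 => [E3 E4].
by split; [exact: eqP | exact: eqAP_sound].
Qed.

Lemma rho_peq u v : peq FB7_rel u v ->
  forall c, endp c u = endp c v /\ peq AP4_rel (rho c u) (rho c v).
Proof.
elim=> {u v}.
- by move=> u c; split=> //; apply: peq_refl.
- by move=> u v _ IH c; case: (IH c) => E H; split; [rewrite E | apply: peq_sym].
- move=> u v w _ IH1 _ IH2 c; case: (IH1 c) => E1 H1; case: (IH2 c) => E2 H2.
  by split; [rewrite E1 | apply: peq_trans H2].
- move=> a b x c; rewrite !endp_cat !rho_cat /= act_inv; split=> //.
  rewrite lab_inv.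
  exact: (peq_cancel AP4_rel).
- move=> a b r Hr c; rewrite !endp_cat !rho_cat.
  case: (rel_loop (endp c a) Hr) => E H; rewrite E; split=> //.
  by have := peq_ctx (rho c a) (rho (endp c a) b) H.
Qed.

Lemma psi_cat u v : psi (u ++ v) = psi u ++ psi v.
Proof. by rewrite /psi map_cat flatten_cat. Qed.

Lemma psi_cons x u : psi (x :: u) = psiL x ++ psi u.
Proof. by []. Qed.

Lemma psiL_inv x : psiL (letter_inv x) = word_inv (psiL x).
Proof. by case: x => k [] /=; rewrite /psiL /= ?word_invK. Qed.

Lemma psi_inv w : psi (word_inv w) = word_inv (psi w).
Proof.
elim: w => // x w IH.
by rewrite word_inv_cons psi_cat IH psi_cons word_inv_cat psi_cons /= cats0 psiL_inv.
Qed.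

Lemma psi_rel r : AP4_rel r -> peq FB7_rel (psi r) [::].
Proof.
case=> i [j [Hij ->]].
have /and3P [_ _ E3] := chk_psi' i j.
move/implyP: E3 => E3; apply: eqFB_sound; apply: E3; exact/eqP.
Qed.

Lemma psi_peq u v : peq AP4_rel u v -> peq FB7_rel (psi u) (psi v).
Proof.
elim=> {u v}.
- by move=> u; apply: peq_refl.
- by move=> u v _ H; apply: peq_sym.
- by move=> u v w _ H1 _ H2; apply: peq_trans H2.
- move=> a b x; rewrite !psi_cat !psi_cons psiL_inv.
  exact: peq_cancel.
- move=> a b r Hr; rewrite !psi_cat.
  by have := peq_ctx (psi a) (psi b) (psi_rel Hr).
Qed.

Lemma endp_P k : endp ord0 (P k) = ord0.
Proof. by have /and3P [/eqP E _ _] := chk_psi' k k. Qed.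

Lemma endp_psiL x : endp ord0 (psiL x) = ord0.
Proof.
case: x => k [] /=; rewrite /psiL /=; last exact: endp_P.
by have := endp_inv ord0 (P k); rewrite endp_P.
Qed.

Lemma endp_psi a : endp ord0 (psi a) = ord0.
Proof. by elim: a => // x a IH; rewrite psi_cons endp_cat endp_psiL. Qed.

Lemma rho_psiL x : peq AP4_rel (rho ord0 (psiL x)) [:: x].
Proof.
have H k : peq AP4_rel (rho ord0 (P k)) [:: gen k].
  have /and3P [_ E _] := chk_psi' k k; exact: eqAP_sound.
case: x => k [] /=; rewrite /psiL /=; last exact: H.
rewrite -{1}(endp_P k) rho_inv.
by have := peq_inv (H k).
Qed.

Lemma rho_psi a : peq AP4_rel (rho ord0 (psi a)) a.
Proof.
elim: a => [|x a IH]; first by apply: peq_refl.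
rewrite psi_cons rho_cat endp_psiL.
by have := peq_cat (rho_psiL x) IH.
Qed.

Lemma lab_tel c x :
  peq FB7_rel (psi (lab c x)) (tr c ++ x :: word_inv (tr (act c x))).
Proof.
have /andP [E1 E2] := chk_tel' c x.1.
by case: x E1 E2 => i [] /= E1 E2; apply: eqFB_sound.
Qed.

Lemma tel c w :
  peq FB7_rel (psi (rho c w)) (tr c ++ w ++ word_inv (tr (endp c w))).
Proof.
elim: w c => [|x w IH] c /=.
  by apply: peq_sym; have := peq_cancel FB7_rel (tr c) [::] [::]; rewrite cats0.
rewrite psi_cat.
apply: peq_trans (peq_cat (lab_tel c x) (IH (act c x))) _.
have := peq_cancel FB7_rel (word_inv (tr (act c x))) (tr c ++ [:: x])
          (w ++ word_inv (tr (endp (act c x) w))).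
by rewrite word_invK -!catA.
Qed.

Lemma mem_In (T : eqType) (x : T) (s : seq T) : x \in s -> List.In x s.
Proof.
elim: s => //= y s IH; rewrite in_cons => /orP [/eqP ->|H]; [by left | by right; apply: IH].
Qed.

Theorem theorem1p6 : commensurable FB7_rel AP4_rel.
Proof.
exists (fun u => exists a, peq FB7_rel u (psi a)), (fun _ => True), (rho ord0).
split.
- split.
  + by move=> u v Huv [a Ha]; exists a; apply: peq_trans (peq_sym Huv) Ha.
  + by exists [::]; apply: peq_refl.
  + by move=> u v [a Ha] [b Hb]; exists (a ++ b); rewrite psi_cat; apply: peq_cat.
  + by move=> u [a Ha]; exists (word_inv a); rewrite psi_inv; apply: peq_inv.
- exists (map tr (enum 'I_16)) => g.
  exists (tr (endp ord0 g)).
    by apply: mem_In; apply: map_f; rewrite mem_enum.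
  exists (psi (rho ord0 g)); split; first by exists (rho ord0 g); apply: peq_refl.
  apply: peq_sym.
  apply: (peq_trans (peq_cat (tel ord0 g) (peq_refl _ (tr (endp ord0 g))))).
  rewrite tr0 /=.
  have := peq_cancel FB7_rel (word_inv (tr (endp ord0 g))) g [::].
  by rewrite word_invK !cats0 -catA.
- by split.
- exists [:: [::]] => g; exists [::]; first by left.
  by exists g; split=> //; rewrite cats0; apply: peq_refl.
- split.
  + by [].
  + by move=> u v _ _ H; case: (rho_peq H ord0).
  + move=> u v [a Ha] _; rewrite rho_cat.
    have [E _] := rho_peq Ha ord0; rewrite E endp_psi; exact: peq_refl.
  + move=> u v [a Ha] [b Hb] H.
    have Eu : endp ord0 u = ord0 by have [E _] := rho_peq Ha ord0; rewrite E endp_psi.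
    have Ev : endp ord0 v = ord0 by have [E _] := rho_peq Hb ord0; rewrite E endp_psi.
    have Tu := tel ord0 u; have Tv := tel ord0 v.
    rewrite Eu tr0 /= cats0 in Tu; rewrite Ev tr0 /= cats0 in Tv.
    apply: peq_trans (peq_sym Tu) _; apply: peq_trans Tv.
    exact: psi_peq.
  + move=> w _; exists (psi w); split; first by exists w; apply: peq_refl.
    exact: rho_psi.
Qed.
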